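(* Under the hypotheses of the one-step equivalence result (with $ev$, $rb$, $su=ev$, $hy$ as defined there), $hy$ absorbs $ev$: $hy\circ ev = hy$ as partial functions on terms.
   Context: Terms: $\Lambda ::= x\mid\lambda x.\Lambda\mid\Lambda\Lambda$; $[N/x]B$ is capture-avoiding substitution. An evaluator is a partial function $\Lambda\rightharpoonup\Lambda$ defined by inference rules, undefined where no finite derivation exists; $\mathrm{id}$ is the identity; composition is undefined where the inner evaluator is. Eval-apply template: given evaluators $la,op_1,ar_1,op_2,ar_2$ (possibly $ea$ itself), $ea$ is defined by (var) $ea(x)=x$; (abs) $ea(\lambda x.B)=\lambda x.B'$ if $la(B)=B'$; (con) $ea(MN)=B'$ if $op_1(M)=\lambda x.B$, $ar_1(N)=N'$, $ea([N'/x]B)=B'$; (neu) $ea(MN)=M''N'$ if $op_1(M)=M'$, $M'$ not an abstraction, $op_2(M')=M''$, $ar_2(N)=N'$. $ev$ is a uniform evaluator: $op_1=ev$, $op_2=\mathrm{id}$, $la=la_e$, $ar_1=ar1_e$, $ar_2=ar2_e$ with each in $\{\mathrm{id},ev\}$. Readback: $rb(x)=x$; $rb(\lambda x.B)=\lambda x.B'$ if $la_r(B)=B'$; $rb(MN)=M'N'$ if $rb(M)=M'$, $ar2_r(N)=N'$, subject to: for $p\in\{la,ar2\}$, $p_r\in\{\mathrm{id},ev,rb\circ ev\}$ if $p_e=\mathrm{id}$ and $p_r\in\{\mathrm{id},rb\}$ if $p_e=ev$; at least one of $la_r,ar2_r$ is in $\{ev, rb\circ ev\}$ and at least one is in $\{rb,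 rb\circ ev\}$. $su:=ev$ and $hy$ is the template instance with $op_1=su$, $ar_1=ar1_e$, $op_2=hy$, $la=la_h$, $ar_2=ar2_h$ where for $p\in\{la,ar2\}$: $p_h=\mathrm{id}$ if $p_r=p_e=\mathrm{id}$; $p_h=su$ if $(p_r,p_e)\in\{(\mathrm{id},ev),(ev,\mathrm{id})\}$; $p_h=hy$ if $p_r\in\{rb, rb\circ ev\}$. A strategy $st_2$ absorbs $st_1$ iff $st_2\circ st_1=st_2$. *)

(* Defs.v *)
From Stdlib Require Import Arith.

Inductive term : Type :=
| Var : nat -> term
| Lam : term -> term
| App : term -> term -> term.

Fixpoint lift (c : nat) (t : term) : term :=
  match t with
  | Var n => if c <=? n then Var (S n) else Var n
  | Lam b => Lam (lift (S c) b)
  | App m n => App (lift c m) (lift c n)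
  end.

(* capture-avoiding substitution [u/k]t, removing binder index k *)
Fixpoint subst (k : nat) (u : term) (t : term) : term :=
  match t with
  | Var n => if n =? k then u else if k <? n then Var (pred n) else Var n
  | Lam b => Lam (subst (S k) (lift 0 u) b)
  | App m n => App (subst k u m) (subst k u n)
  end.

Definition beta (B N : term) : term := subst 0 N B.

Definition is_abs (t : term) : Prop :=
  match t with Lam _ => True | _ => False end.

(* choices of the uniform evaluator ev: each of la_e, ar1_e, ar2_e is id or ev *)
Inductive echoice := EId | EEv.

(* choices of the readback: id, ev, rb, or rb o ev *)
Inductive rchoice := RId | REv | RRb | RRbEv.

(* choices of the hybrid: id, su (= ev), or hy *)
Inductive hchoice := HId | HSu | HHy.

Section Evaluators.
Variables (la_e ar1_e ar2_e : echoice).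

(* the uniform evaluator ev: op1 = ev, op2 = id *)
Inductive ev : term -> term -> Prop :=
| ev_var x : ev (Var x) (Var x)
| ev_abs_id B : la_e = EId -> ev (Lam B) (Lam B)
| ev_abs_ev B B' : la_e = EEv -> ev B B' -> ev (Lam B) (Lam B')
| ev_con M N B N' B' :
    ev M (Lam B) ->
    (ar1_e = EId /\ N' = N \/ ar1_e = EEv /\ ev N N') ->
    ev (beta B N') B' -> ev (App M N) B'
| ev_neu M N M' N' :
    ev M M' -> ~ is_abs M' ->
    (ar2_e = EId /\ N' = N \/ ar2_e = EEv /\ ev N N') ->
    ev (App M N) (App M' N').

Variables (la_r ar2_r : rchoice).

Inductive rb : term -> term -> Prop :=
| rb_var x : rb (Var x) (Var x)
| rb_abs B B' :
    (la_r = RId /\ B' = B \/ la_r = REv /\ ev B B' \/ la_r = RRb /\ rb B B'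
     \/ la_r = RRbEv /\ exists B0, ev B B0 /\ rb B0 B') ->
    rb (Lam B) (Lam B')
| rb_app M N M' N' :
    rb M M' ->
    (ar2_r = RId /\ N' = N \/ ar2_r = REv /\ ev N N' \/ ar2_r = RRb /\ rb N N'
     \/ ar2_r = RRbEv /\ exists N0, ev N N0 /\ rb N0 N') ->
    rb (App M N) (App M' N').

End Evaluators.

Definition compat (pe : echoice) (pr : rchoice) : Prop :=
  match pe, pr with
  | EId, (RId | REv | RRbEv) => True
  | EEv, (RId | RRb) => True
  | _, _ => False
  end.

Definition is_ev_like (pr : rchoice) : Prop :=
  match pr with REv | RRbEv => True | _ => False end.
Definition is_rb_like (pr : rchoice) : Prop :=
  match pr with RRb | RRbEv => True | _ => False end.

Definition valid_params (la_e ar2_e : echoice) (la_r ar2_r : rchoice) : Prop :=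
  compat la_e la_r /\ compat ar2_e ar2_r /\
  (is_ev_like la_r \/ is_ev_like ar2_r) /\
  (is_rb_like la_r \/ is_rb_like ar2_r).

(* p_h = id if p_r = p_e = id; su if (p_r,p_e) in {(id,ev),(ev,id)};
   hy if p_r in {rb, rb o ev}.  (Other combinations are excluded by compat.) *)
Definition hchoice_of (pe : echoice) (pr : rchoice) : hchoice :=
  match pr, pe with
  | RId, EId => HId
  | RId, EEv => HSu
  | REv, _ => HSu
  | RRb, _ => HHy
  | RRbEv, _ => HHy
  end.

Section Hybrid.
Variables (la_e ar1_e ar2_e : echoice) (la_h ar2_h : hchoice).

Notation su := (ev la_e ar1_e ar2_e).

(* the hybrid hy: op1 = su, ar1 = ar1_e, op2 = hy, la = la_h, ar2 = ar2_h *)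
Inductive hy : term -> term -> Prop :=
| hy_var x : hy (Var x) (Var x)
| hy_abs B B' :
    (la_h = HId /\ B' = B \/ la_h = HSu /\ su B B' \/ la_h = HHy /\ hy B B') ->
    hy (Lam B) (Lam B')
| hy_con M N B N' B' :
    su M (Lam B) ->
    (ar1_e = EId /\ N' = N \/ ar1_e = EEv /\ su N N') ->
    hy (beta B N') B' -> hy (App M N) B'
| hy_neu M N M' M'' N' :
    su M M' -> ~ is_abs M' -> hy M' M'' ->
    (ar2_h = HId /\ N' = N \/ ar2_h = HSu /\ su N N' \/ ar2_h = HHy /\ hy N N') ->
    hy (App M N) (App M'' N').

End Hybrid.

(* Main.v *)
Require Import Defs.

Section S.
Variables (la_e ar1_e ar2_e : echoice).
Notation EV := (ev la_e ar1_e ar2_e).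

Lemma ev_ind' (P : term -> term -> Prop) :
 (forall x, P (Var x) (Var x)) ->
 (forall B, la_e = EId -> P (Lam B) (Lam B)) ->
 (forall B B', la_e = EEv -> EV B B' -> P B B' -> P (Lam B) (Lam B')) ->
 (forall M N B N' B', EV M (Lam B) -> P M (Lam B) ->
    (ar1_e = EId /\ N' = N \/ ar1_e = EEv /\ EV N N' /\ P N N') ->
    EV (beta B N') B' -> P (beta B N') B' -> P (App M N) B') ->
 (forall M N M' N', EV M M' -> P M M' -> ~ is_abs M' ->
    (ar2_e = EId /\ N' = N \/ ar2_e = EEv /\ EV N N' /\ P N N') ->
    P (App M N) (App M' N')) ->
 forall t m, EV t m -> P t m.
Proof.
  intros H1 H2 H3 H4 H5.
  refine (fix F t m (H : EV t m) {struct H} : P t m := _).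
  destruct H as [x|B e|B B' e h|M N B N' B' h1 h2 h3|M N M' N' h1 n h2].
  - apply H1.
  - apply H2; exact e.
  - apply H3; [exact e|exact h|exact (F _ _ h)].
  - apply (H4 M N B N' B' h1 (F _ _ h1)).
    + destruct h2 as [h2|[e h2]]; [left; exact h2|right; exact (conj e (conj h2 (F _ _ h2)))].
    + exact h3.
    + exact (F _ _ h3).
  - apply (H5 M N M' N' h1 (F _ _ h1) n).
    destruct h2 as [h2|[e h2]]; [left; exact h2|right; exact (conj e (conj h2 (F _ _ h2)))].
Qed.

Lemma ev_det : forall t m1, EV t m1 -> forall m2, EV t m2 -> m1 = m2.
Proof.
  apply (ev_ind' (fun t m1 => forall m2, EV t m2 -> m1 = m2)).
  - intros x m2 H; inversion H; auto.
  - intros B e m2 H; inversion H; subst; auto; congruence.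
  - intros B B' e h IH m2 H; inversion H; subst; try congruence.
    f_equal; auto.
  - intros M N B N' B' h1 IH1 h2 h3 IH3 m2 H; inversion H; subst.
    + assert (E : Lam B = Lam B0) by auto. inversion E; subst.
      apply IH3.
      match goal with H : _ \/ _ |- _ => destruct H as [[? ?]|[? ?]] end;
      destruct h2 as [[? ?]|[? [? IH2]]]; subst; try congruence.
      rewrite (IH2 _ ltac:(eassumption)). assumption.
    + match goal with H : ~ is_abs ?X, H' : EV M ?X |- _ =>
        rewrite <- (IH1 _ H') in H; simpl in H; tauto end.
  - intros M N M' N' h1 IH1 n h2 m2 H; inversion H; subst.
    + match goal with H' : EV M (Lam _) |- _ => rewrite (IH1 _ H') in n; simpl in n; tauto end.
    + f_equal; auto.
      match goal with H : _ \/ _ |- _ => destruct H as [[? ?]|[? ?]] end;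
      destruct h2 as [[? ?]|[? [? IH2]]]; subst; try congruence; auto.
Qed.

Lemma ev_idem : forall t m, EV t m -> EV m m.
Proof.
  apply (ev_ind' (fun t m => EV m m)).
  - intros; constructor.
  - intros; constructor; auto.
  - intros; apply ev_abs_ev; auto.
  - intros; auto.
  - intros M N M' N' h1 IH1 n h2. apply ev_neu; auto.
    destruct h2 as [[? ?]|[? [? ?]]]; [left|right]; auto.
Qed.

Lemma ev_out : forall t m m', EV t m -> EV m m' -> m' = m.
Proof. intros t m m' H1 H2. apply (ev_det _ _ H2), (ev_idem _ _ H1). Qed.

Lemma ev_trans : forall t m m', EV t m -> EV m m' -> EV t m'.
Proof. intros t m m' H1 H2. rewrite (ev_out _ _ _ H1 H2). exact H1. Qed.

Variables (la_h ar2_h : hchoice).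
Notation HY := (hy la_e ar1_e ar2_e la_h ar2_h).

Lemma hy_ind' (P : term -> term -> Prop) :
 (forall x, P (Var x) (Var x)) ->
 (forall B B', (la_h = HId /\ B' = B \/ la_h = HSu /\ EV B B' \/ la_h = HHy /\ HY B B' /\ P B B') ->
    P (Lam B) (Lam B')) ->
 (forall M N B N' B', EV M (Lam B) ->
    (ar1_e = EId /\ N' = N \/ ar1_e = EEv /\ EV N N') ->
    HY (beta B N') B' -> P (beta B N') B' -> P (App M N) B') ->
 (forall M N M' M'' N', EV M M' -> ~ is_abs M' -> HY M' M'' -> P M' M'' ->
    (ar2_h = HId /\ N' = N \/ ar2_h = HSu /\ EV N N' \/ ar2_h = HHy /\ HY N N' /\ P N N') ->
    P (App M N) (App M'' N')) ->
 forall t m, HY t m -> P t m.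
Proof.
  intros H1 H2 H4 H5.
  refine (fix F t m (H : HY t m) {struct H} : P t m := _).
  destruct H as [x|B B' h|M N B N' B' h1 h2 h3|M N M' M'' N' h1 n h h2].
  - apply H1.
  - apply H2. destruct h as [h|[h|[e h]]]; [left; exact h|right; left; exact h|
      right; right; exact (conj e (conj h (F _ _ h)))].
  - exact (H4 M N B N' B' h1 h2 h3 (F _ _ h3)).
  - apply (H5 M N M' M'' N' h1 n h (F _ _ h)).
    destruct h2 as [h2|[h2|[e h2]]]; [left; exact h2|right; left; exact h2|
      right; right; exact (conj e (conj h2 (F _ _ h2)))].
Qed.

End S.

Theorem mainTheorem11 (la_e ar1_e ar2_e : echoice) (la_r ar2_r : rchoice) :
  valid_params la_e ar2_e la_r ar2_r ->
  forall t t' : term,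
    (exists m, ev la_e ar1_e ar2_e t m /\
               hy la_e ar1_e ar2_e (hchoice_of la_e la_r) (hchoice_of ar2_e ar2_r) m t')
    <-> hy la_e ar1_e ar2_e (hchoice_of la_e la_r) (hchoice_of ar2_e ar2_r) t t'.
Proof.
  intros _.
  assert (LA : la_e = EEv -> hchoice_of la_e la_r <> HId)
    by (intros ->; destruct la_r; discriminate).
  assert (AR : ar2_e = EEv -> hchoice_of ar2_e ar2_r <> HId)
    by (intros ->; destruct ar2_r; discriminate).
  generalize (hchoice_of la_e la_r) (hchoice_of ar2_e ar2_r) LA AR.
  clear LA AR. intros la_h ar2_h LA AR.
  intros t t'; split.
  - intros [m [H1 H2]]. revert t' H2. revert t m H1.
    apply (ev_ind' la_e ar1_e ar2_e (fun t m => forall t', hy la_e ar1_e ar2_e la_h ar2_h m t' -> hy la_e ar1_e ar2_e la_h ar2_h t t')).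
    + auto.
    + auto.
    + intros B B' e h IH t' H. inversion H as [|B0 B'' H1| |]; subst t' B0.
      apply hy_abs.
      destruct H1 as [[? ?]|[[? ?]|[? ?]]]; [exfalso; exact (LA e H0)| |].
      * right; left; split; auto. eapply ev_trans; eauto.
      * right; right; auto.
    + intros M N B N' B' h1 _ h2 h3 IH3 t' H. eapply hy_con; eauto.
      destruct h2 as [?|[? [? ?]]]; [left|right]; auto.
    + intros M N M' N' h1 _ n h2 t' H. inversion H; subst.
      * exfalso. apply n. rewrite <- (ev_out _ _ _ _ _ _ h1 H2). exact I.
      * rewrite (ev_out _ _ _ _ _ _ h1 H2) in H4.
        apply (hy_neu _ _ _ _ _ M N M' M'' N'0 h1 n H4).
        destruct h2 as [[e ?]|[e [hN IHN]]]; [subst N'; auto|].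
        destruct H6 as [[? ?]|[[? ?]|[? ?]]]; [exfalso; exact (AR e H0)| |].
        -- right; left; split; auto. eapply ev_trans; eauto.
        -- right; right; auto.
  - revert t t'.
    apply (hy_ind' la_e ar1_e ar2_e la_h ar2_h (fun t t' => exists m, ev la_e ar1_e ar2_e t m /\ hy la_e ar1_e ar2_e la_h ar2_h m t')).
    + intros x; exists (Var x); split; constructor.
    + intros B B' h. destruct la_e eqn:E.
      * exists (Lam B); split; [apply ev_abs_id; auto|].
        apply hy_abs. destruct h as [?|[?|[? [? ?]]]]; auto.
      * destruct h as [[? ?]|[[? h]|[? [_ [m0 [h1 h2]]]]]]; [exfalso; exact (LA eq_refl H)| |].
        -- exists (Lam B'); split; [apply ev_abs_ev; auto|].
           apply hy_abs; right; left; split; auto. eapply ev_idem; eauto.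
        -- exists (Lam m0); split; [apply ev_abs_ev; auto|].
           apply hy_abs; right; right; auto.
    + intros M N B N' B' h1 h2 _ [m [IH1 IH2]]. exists m; split; auto.
      eapply ev_con; [exact h1| |exact IH1].
      destruct h2 as [?|[? ?]]; [left|right]; auto.
    + intros M N M' M'' N' h1 n h _ h2.
      assert (EX : exists N1, (ar2_e = EId /\ N1 = N \/ ar2_e = EEv /\ ev la_e ar1_e ar2_e N N1) /\
         (ar2_h = HId /\ N' = N1 \/ ar2_h = HSu /\ ev la_e ar1_e ar2_e N1 N' \/ ar2_h = HHy /\ hy la_e ar1_e ar2_e la_h ar2_h N1 N')).
      { destruct ar2_e eqn:E.
        - exists N; split; [left; auto|]. destruct h2 as [?|[?|[? [? ?]]]]; auto.
        - destruct h2 as [[? ?]|[[? hN]|[? [_ [N1 [hN1 hN2]]]]]]; [exfalso; exact (AR eq_refl H)| |].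
          + exists N'; split; [right; auto|]. right; left; split; auto. eapply ev_idem; eauto.
          + exists N1; split; [right; auto|]. right; right; auto. }
      destruct EX as [N1 [E1 E2]].
      exists (App M' N1); split.
      * apply ev_neu; auto.
      * eapply hy_neu; eauto. eapply ev_idem; eauto.
Qed.
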